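(* Let $n=2k+1$ with $k\ge 1$. If $S$ is a strong resolving set of $U_n$, then $|S|\ge 2n$.
   Context: For $n\ge 3$, $U_n$ is the graph with vertex set $\{a_i,b_i,c_i,d_i,e_i : 1\le i\le n\}$ and edge set $\{a_ia_{i+1}, b_ib_{i+1}, e_ie_{i+1}, a_ib_i, b_ic_i, c_id_i, d_ie_i, c_{i+1}d_i : 1\le i\le n\}$, indices taken modulo $n$. $d$ is the graph distance. A vertex $w$ strongly resolves distinct vertices $u,v$ if $d(v,w)=d(v,u)+d(u,w)$ or $d(u,w)=d(u,v)+d(v,w)$. A set $S$ is a strong resolving set if every two distinct vertices are strongly resolved by some vertex of $S$. *)

(* Defs.v *)
From mathcomp Require Import all_boot.
Set Implicit Arguments. Unset Strict Implicit. Unset Printing Implicit Defensive.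

(* Vertices of U_n: pairs (l, i) with l : 'I_5 encoding the letter
   (0 = a, 1 = b, 2 = c, 3 = d, 4 = e) and i : 'I_n the index
   (indices 1..n of the paper are 0..n-1 here, taken modulo n). *)
Definition V (n : nat) : finType := ('I_5 * 'I_n)%type.

Definition succ_mod (n : nat) (i j : 'I_n) : bool := val j == (val i).+1 %% n.

Definition Uedge0 (n : nat) (u v : V n) : bool :=
  let: (l, i) := u in let: (l', j) := v in
  [|| [&& val l == 0, val l' == 0 & succ_mod i j]
    , [&& val l == 1, val l' == 1 & succ_mod i j]
    , [&& val l == 4, val l' == 4 & succ_mod i j]
    , [&& val l == 0, val l' == 1 & i == j]
    , [&& val l == 1, val l' == 2 & i == j]
    , [&& val l == 2, val l' == 3 & i == j]
    , [&& val l == 3, val l' == 4 & i == j]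
    | [&& val l == 2, val l' == 3 & succ_mod j i]].    (* c_{i+1} d_i *)

Definition Uadj (n : nat) : rel (V n) := fun u v => Uedge0 u v || Uedge0 v u.

Fixpoint ball (n : nat) (k : nat) (u : V n) : {set V n} :=
  match k with
  | 0 => [set u]
  | k'.+1 => ball k' u :|: [set y | [exists x in ball k' u, Uadj x y]]
  end.

(* Graph distance: least k such that v lies within k steps of u
   (U_n is connected, so this is attained below #|V n|). *)
Definition dist (n : nat) (u v : V n) : nat :=
  find (fun k => v \in ball k u) (iota 0 #|V n|).

Definition strongly_resolves (n : nat) (w u v : V n) : Prop :=
  dist v w = dist v u + dist u w \/ dist u w = dist u v + dist v w.

Definition strong_resolving_set (n : nat) (S : {set V n}) : Prop :=
  forall u v : V n, u <> v -> exists2 w, w \in S & strongly_resolves w u v.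

(* Main.v *)
Require Import Defs.
From mathcomp Require Import all_boot zify.
Set Implicit Arguments. Unset Strict Implicit. Unset Printing Implicit Defensive.

Section Gen.
Variable n : nat.

Lemma Uadj_sym (x y : V n) : Uadj x y = Uadj y x.
Proof. by rewrite /Uadj orbC. Qed.

Lemma ball0 (u y : V n) : (y \in ball 0 u) = (y == u).
Proof. by rewrite /= in_set1. Qed.

Lemma ball_S m (u y : V n) :
  (y \in ball m.+1 u) = (y \in ball m u) || [exists x in ball m u, Uadj x y].
Proof. by rewrite /= in_setU in_set. Qed.

Lemma ball_step m (u x y : V n) : x \in ball m u -> Uadj x y -> y \in ball m.+1 u.
Proof. move=> Hx Hxy; rewrite ball_S; apply/orP; right; apply/existsP; exists x; by rewrite Hx Hxy. Qed.

Lemma ball_sub m (u y : V n) : y \in ball m u -> y \in ball m.+1 u.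
Proof. by move=> H; rewrite ball_S H. Qed.

Lemma ball_mono m m' (u y : V n) : m <= m' -> y \in ball m u -> y \in ball m' u.
Proof.
move=> H; elim: m' H => [|m' IH]; first by rewrite leqn0 => /eqP ->.
rewrite leq_eqVlt => /orP [/eqP -> //| Hlt] Hy.
by apply: ball_sub; apply: IH.
Qed.

Lemma ball_first m (u y : V n) : y \in ball m.+1 u ->
  y \in ball m u \/ exists x, Uadj u x /\ y \in ball m x.
Proof.
elim: m y => [|m IH] y.
  rewrite ball_S ball0 => /orP [->|/existsP [x /andP [Hx Hxy]]]; first by left.
  move: Hx; rewrite ball0 => /eqP Hx; subst x; right; exists y; split=>//.
  by rewrite ball0.
rewrite ball_S => /orP [/IH [H|[x [Hux Hx]]]|/existsP [z /andP [Hz Hzy]]].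
- by left; apply: ball_sub.
- by right; exists x; split=>//; apply: ball_sub.
- case: (IH z Hz) => [H|[x [Hux Hx]]].
  + by left; apply: ball_step Hzy.
  + by right; exists x; split=>//; apply: ball_step Hzy.
Qed.

Lemma ball_sym m (u y : V n) : y \in ball m u -> u \in ball m y.
Proof.
elim: m u y => [|m IH] u y; first by rewrite !ball0 eq_sym.
move/ball_first => [H|[x [Hux Hx]]]; first by apply: ball_sub; apply: IH.
by apply: ball_step (IH _ _ Hx) _; rewrite Uadj_sym.
Qed.

Lemma ball_trans a b (u y z : V n) : y \in ball a u -> z \in ball b y -> z \in ball (a + b) u.
Proof.
move=> Hy; elim: b z => [|b IH] z; first by rewrite ball0 addn0 => /eqP ->.
rewrite ball_S addnS => /orP [H|/existsP [x /andP [Hx Hxz]]].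
  by apply: ball_sub; apply: IH.
by apply: ball_step (IH _ Hx) Hxz.
Qed.

Local Notation N := #|V n|.

Lemma dist_le_N (u v : V n) : dist u v <= N.
Proof. by rewrite /dist; have := find_size (fun k => v \in ball k u) (iota 0 N); rewrite size_iota. Qed.

Lemma dist_ball (u v : V n) : dist u v < N -> v \in ball (dist u v) u.
Proof.
move=> H.
have H' : dist u v < size (iota 0 N) by rewrite size_iota.
have := nth_find 0 (a := fun k => v \in ball k u) (s := iota 0 N).
rewrite has_find => /(_ H').
by rewrite nth_iota // add0n.
Qed.

Lemma dist_min m (u v : V n) : v \in ball m u -> dist u v <= m.
Proof.
move=> H; case: (leqP N m) => Hm; first by apply: leq_trans (dist_le_N u v) Hm.
rewrite leqNgt; apply/negP => Hlt.
have := before_find 0 (a := fun k => v \in ball k u) Hlt.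
by rewrite nth_iota // add0n H.
Qed.

Lemma dist_sym (u v : V n) : dist u v = dist v u.
Proof.
suff H : forall u v : V n, dist u v <= dist v u by apply/eqP; rewrite eqn_leq !H.
move=> x y; case: (ltnP (dist y x) N) => H.
  by apply: dist_min; apply: ball_sym; apply: dist_ball.
by apply: leq_trans (dist_le_N _ _) H.
Qed.

Lemma dist_tri (u v w : V n) : dist u w <= dist u v + dist v w.
Proof.
case: (ltnP (dist u v) N) => H1; last first.
  by apply: leq_trans (dist_le_N _ _) (leq_trans H1 (leq_addr _ _)).
case: (ltnP (dist v w) N) => H2; last first.
  by apply: leq_trans (dist_le_N _ _) (leq_trans H2 (leq_addl _ _)).
by apply: dist_min; apply: ball_trans (dist_ball H1) (dist_ball H2).
Qed.

Lemma dist_edge (u v : V n) : Uadj u v -> dist u v <= 1.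
Proof. move=> H; apply: dist_min; apply: ball_step H; by rewrite ball0. Qed.

Lemma dist_refl (u : V n) : dist u u = 0.
Proof. by apply/eqP; rewrite -leqn0; apply: dist_min; rewrite ball0. Qed.

Lemma dist0 (u v : V n) : dist u v = 0 -> u = v.
Proof.
move=> H.
have HN : 0 < N by apply/card_gt0P; exists u.
have := dist_ball (u:=u) (v:=v); rewrite H => /(_ HN).
by rewrite ball0 => /eqP ->.
Qed.

Lemma lip_lower (f : V n -> nat) (u v : V n) :
  f u = 0 -> (forall x y, Uadj x y -> f y <= f x + 1) -> (forall y, f y <= N) ->
  f v <= dist u v.
Proof.
move=> Hu Hl Hb.
have Hm : forall m y, y \in ball m u -> f y <= m.
  elim=> [|m IH] y; first by rewrite ball0 => /eqP ->; rewrite Hu.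
  rewrite ball_S => /orP [/IH H|/existsP [x /andP [Hx Hxy]]]; first by apply: leq_trans H _.
  by apply: leq_trans (Hl _ _ Hxy) _; rewrite addn1 ltnS; apply: IH.
case: (ltnP (dist u v) N) => H; first by apply: Hm; apply: dist_ball.
by apply: leq_trans (Hb v) H.
Qed.

Lemma mmd1 (u v w : V n) : u <> v ->
  (forall x, Uadj u x -> dist v x <= dist v u) ->
  dist v w = dist v u + dist u w -> w = u.
Proof.
move=> Huv Hx Hw.
case: (ltnP (dist u w) N) => HN; last first.
  have : dist v u + dist u w <= N by rewrite -Hw dist_le_N.
  have HN' : dist u w = N by apply/eqP; rewrite eqn_leq dist_le_N HN.
  rewrite HN' -{2}(add0n N) leq_add2r leqn0 => /eqP /dist0 H.
  by exfalso; apply: Huv.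
case E : (dist u w) => [|m]; first by move/dist0: E.
have := dist_ball HN; rewrite E => /ball_first [H|[x [Hux Hxw]]].
  by have := dist_min H; rewrite E ltnn.
have H1 := dist_min Hxw.
have H2 := dist_tri v x w.
have H3 := Hx _ Hux.
lia.
Qed.

Lemma mmd (u v w : V n) : u <> v ->
  (forall x, Uadj u x -> dist v x <= dist v u) ->
  (forall x, Uadj v x -> dist u x <= dist u v) ->
  strongly_resolves w u v -> w = u \/ w = v.
Proof.
move=> Huv H1 H2 [H|H]; first by left; apply: mmd1 H.
by right; apply: mmd1 H => // E; apply: Huv.
Qed.
End Gen.

Section Conc.
Variable k : nat.
Hypothesis Hk : 0 < k.
Local Notation n := (2 * k + 1).

Lemma n_gt0 : 0 < n. Proof. lia. Qed.

Definition ix (j : nat) : 'I_n := Ordinal (ltn_pmod j n_gt0).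
Definition vt (l j : nat) : V n := (inord l, ix j).
Definition rel (i j : 'I_n) : nat := (nat_of_ord j + (n - nat_of_ord i)) %% n.
Definition step (r r' : nat) : Prop := (r' = r + 1 /\ r + 1 < n) \/ (r = n - 1 /\ r' = 0).

Lemma rel_lt i j : rel i j < n. Proof. by rewrite /rel ltn_pmod // n_gt0. Qed.

Lemma modS_step J : step (J %% n) (J.+1 %% n).
Proof.
have -> : J.+1 %% n = (J %% n).+1 %% n by rewrite -[J.+1]addn1 -modnDml addn1.
have Hr : J %% n < n by rewrite ltn_pmod // n_gt0.
rewrite /step; case: (ltngtP (J %% n).+1 n) => H.
- by left; rewrite modn_small //; lia.
- lia.
- by right; rewrite H modnn; lia.
Qed.

Lemma rel_step i j j' : succ_mod j j' -> step (rel i j) (rel i j').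
Proof.
rewrite /succ_mod /rel => /eqP ->; rewrite modnDml addSn; exact: modS_step.
Qed.

Definition adjR (l l' r r' : nat) : Prop :=
  ((l = 0 /\ l' = 0 \/ l = 1 /\ l' = 1 \/ l = 4 /\ l' = 4) /\ (step r r' \/ step r' r)) \/
  ((l = 0 /\ l' = 1 \/ l = 1 /\ l' = 0 \/ l = 1 /\ l' = 2 \/ l = 2 /\ l' = 1 \/
    l = 2 /\ l' = 3 \/ l = 3 /\ l' = 2 \/ l = 3 /\ l' = 4 \/ l = 4 /\ l' = 3) /\ r = r') \/
  (l = 2 /\ l' = 3 /\ step r' r) \/ (l = 3 /\ l' = 2 /\ step r r').

Lemma adj_cases i (x y : V n) : Uadj x y -> adjR (val x.1) (val y.1) (rel i x.2) (rel i y.2).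
Proof.
case: x => l j; case: y => l' j'; rewrite /Uadj /Uedge0 /= => H.
repeat (case/orP: H => H);
  case/and3P: H => /eqP -> /eqP -> H;
  (try (move/eqP: H => ->)); (try (have := rel_step i H)); rewrite /adjR; tauto.
Qed.

Definition mm r := minn r (n - r).
Definition mm' r := minn r (n.-1 - r).

Definition ha (l r : nat) : nat :=
  match l with 0 => mm r | 1 => mm r + 1 | 2 => mm r + 2 | 3 => mm' r + 3 | _ => mm' r + 4 end.
Definition hc (l r : nat) : nat :=
  match l with 0 => mm r + 2 | 1 => mm r + 1 | 2 => minn (2 * mm r) (mm r + 2)
  | 3 => minn (2 * mm' r + 1) (mm' r + 3) | _ => mm' r + 2 end.

Lemma ha_lip l l' r r' : r < n -> r' < n -> adjR l l' r r' -> ha l' r' <= ha l r + 1.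
Proof.
rewrite /adjR /step => Hr Hr' H.
decompose [and or] H; subst; rewrite /ha /mm /mm'; lia.
Qed.

Lemma hc_lip l l' r r' : r < n -> r' < n -> adjR l l' r r' -> hc l' r' <= hc l r + 1.
Proof.
rewrite /adjR /step => Hr Hr' H.
decompose [and or] H; subst; rewrite /hc /mm /mm'; lia.
Qed.

Lemma cardV : #|V n| = 5 * n.
Proof. by rewrite /V card_prod !card_ord. Qed.

Lemma rel_self (i : 'I_n) : rel i i = 0.
Proof. rewrite /rel subnKC; [exact: modnn | exact: ltnW (ltn_ord i)]. Qed.

Lemma rel_ix (i : 'I_n) t : rel i (ix (nat_of_ord i + t)) = t %% n.
Proof.
rewrite /rel /= modnDml.
have -> : nat_of_ord i + t + (n - nat_of_ord i) = t + n by have := ltn_ord i; lia.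
by rewrite modnDr.
Qed.

Lemma ix_val (i : 'I_n) : ix (nat_of_ord i) = i.
Proof. by apply: val_inj; rewrite /= modn_small. Qed.

Lemma ix_n j : ix (j + n) = ix j.
Proof. by apply: val_inj; rewrite /= modnDr. Qed.

Lemma vx_eq (i : 'I_n) (x : V n) : x = vt (val x.1) (nat_of_ord i + rel i x.2).
Proof.
case: x => l j; rewrite /vt inord_val /=; congr pair; apply: val_inj.
rewrite /= /rel modnDmr.
have -> : nat_of_ord i + (nat_of_ord j + (n - nat_of_ord i)) = nat_of_ord j + n by have := ltn_ord i; lia.
by rewrite modnDr modn_small.
Qed.

Lemma sm_ix j : succ_mod (ix j) (ix (j + 1)).
Proof. by rewrite /succ_mod /= -[(j %% n).+1]addn1 modnDml. Qed.

Lemma adj_h l j : l \in [:: 0; 1; 4] -> Uadj (vt l j) (vt l (j + 1)).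
Proof.
rewrite /Uadj /Uedge0 /vt /= !inE => H.
have Hl : l < 5 by case/or3P: H => /eqP ->.
rewrite inordK // sm_ix.
by case/or3P: H => /eqP ->.
Qed.

Lemma adj_v l j : l < 4 -> Uadj (vt l j) (vt l.+1 j).
Proof.
rewrite /Uadj /Uedge0 /vt /= => H.
rewrite !inordK ?eqxx //; last by apply: ltn_trans H _.
by case: l H => [|[|[|[|]]]].
Qed.

Lemma adj_d j : Uadj (vt 2 (j + 1)) (vt 3 j).
Proof.
rewrite /Uadj /Uedge0 /vt /= !inordK //= sm_ix.
by rewrite !orbT.
Qed.

Lemma walk l j t : l \in [:: 0; 1; 4] -> dist (vt l j) (vt l (j + t)) <= t.
Proof.
move=> Hl; elim: t => [|t IH]; first by rewrite addn0 dist_refl.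
apply: leq_trans (dist_tri _ (vt l (j + t)) _) _.
rewrite -[t.+1]addn1 leq_add //.
rewrite addnA.
apply: dist_edge; exact: adj_h.
Qed.


Lemma val_vt1 l j : l < 5 -> val (vt l j).1 = l.
Proof. by move=> H; rewrite /vt /= inordK. Qed.

Lemma vt_ord sl (i : 'I_n) : vt sl i = (inord sl, i).
Proof. by rewrite /vt ix_val. Qed.

Lemma lowF (h : nat -> nat -> nat) sl (i : 'I_n) (v : V n) : sl < 5 -> h sl 0 = 0 ->
  (forall l l' r r', r < n -> r' < n -> adjR l l' r r' -> h l' r' <= h l r + 1) ->
  (forall l r, h l r <= 5 * n) ->
  h (val v.1) (rel i v.2) <= dist (vt sl i) v.
Proof.
move=> Hsl H0 Hl Hb.
apply: (lip_lower (f := fun v : V n => h (val v.1) (rel i v.2))).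
- by rewrite val_vt1 // vt_ord /= rel_self.
- move=> x y Hxy; apply: Hl; rewrite ?rel_lt //; exact: adj_cases.
- by move=> y; rewrite cardV.
Qed.

Lemma nbr sl (i : 'I_n) (x : V n) : sl < 5 -> Uadj (vt sl i) x ->
  adjR sl (val x.1) 0 (rel i x.2).
Proof.
move=> Hsl H; have := adj_cases i H.
by rewrite val_vt1 // vt_ord /= rel_self.
Qed.

Lemma vt_n l j : vt l (j + n) = vt l j.
Proof. by rewrite /vt ix_n. Qed.

Lemma vt_mod l j t : vt l (j %% n + t) = vt l (j + t).
Proof. by rewrite /vt; congr pair; apply: val_inj; rewrite /= modnDml. Qed.

Lemma chain (a b c : V n) x y m : dist a b <= x -> dist b c <= y -> x + y <= m -> dist a c <= m.
Proof. move=> H1 H2 H3; apply: leq_trans (dist_tri a b c) _; apply: leq_trans H3; exact: leq_add. Qed.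

Lemma dv l j : l < 4 -> dist (vt l j) (vt l.+1 j) <= 1.
Proof. by move=> H; apply: dist_edge; apply: adj_v. Qed.
Lemma dv' l j : l < 4 -> dist (vt l.+1 j) (vt l j) <= 1.
Proof. by move=> H; rewrite dist_sym; apply: dv. Qed.

Lemma walkg l j j' t : l \in [:: 0; 1; 4] -> (j + t = j' \/ j + t = j' + n) ->
  dist (vt l j) (vt l j') <= t.
Proof. by move=> Hl [<-|E]; [|rewrite -[vt l j']vt_n -E]; apply: walk. Qed.
Lemma walkg' l j j' t : l \in [:: 0; 1; 4] -> (j + t = j' \/ j + t = j' + n) ->
  dist (vt l j') (vt l j) <= t.
Proof. by move=> Hl H; rewrite dist_sym; apply: walkg. Qed.

Lemma ha_b l r : ha l r <= 5 * n.
Proof. rewrite /ha /mm /mm'; case: l => [|[|[|[|]]]]; lia. Qed.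
Lemma hc_b l r : hc l r <= 5 * n.
Proof. rewrite /hc /mm /mm'; case: l => [|[|[|[|]]]]; lia. Qed.


Lemma ha00 : ha 0 0 = 0. Proof. rewrite /ha /mm; lia. Qed.
Lemma hc20 : hc 2 0 = 0. Proof. rewrite /hc /mm; lia. Qed.

Ltac st b x y := apply: (chain (b := b) (x := x) (y := y)); [| |lia].

Lemma vneq l l' j j' : l < 5 -> l' < 5 -> l != l' -> vt l j <> vt l' j'.
Proof. by move=> H1 H2 /eqP H E; apply: H; rewrite -(val_vt1 j H1) -(val_vt1 j' H2) E. Qed.

Lemma pairA (i : 'I_n) w : strongly_resolves w (vt 0 i) (vt 4 (i + k)) ->
  w = vt 0 i \/ w = vt 4 (i + k).
Proof.
have low : k + 4 <= dist (vt 0 i) (vt 4 (i + k)).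
  have := lowF (h := ha) (sl := 0) i (vt 4 (i + k)) isT ha00 ha_lip ha_b.
  rewrite val_vt1 // /vt /= rel_ix modn_small; last lia.
  by rewrite /ha /mm'; lia.
apply: mmd; first by apply: vneq.
- move=> x Hx; rewrite [X in _ <= X]dist_sym; apply: (leq_trans _ low).
  have := nbr (isT : 0 < 5) Hx; have := rel_lt i x.2; rewrite /adjR /step => Hr H.
  have : (val x.1 = 0 /\ rel i x.2 = 1) \/ (val x.1 = 0 /\ rel i x.2 = n - 1) \/
         (val x.1 = 1 /\ rel i x.2 = 0) by lia.
  case=> [[E1 E2]|[[E1 E2]|[E1 E2]]]; rewrite (vx_eq i x) E1 E2.
  + st (vt 3 (i + k)) 1 (k + 3); first by apply: dv'.
    st (vt 2 (i + k)) 1 (k + 2); first by apply: dv'.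
    st (vt 1 (i + k)) 1 (k + 1); first by apply: dv'.
    st (vt 0 (i + k)) 1 (k - 1); first by apply: dv'.
    apply: walkg' => //; lia.
  + st (vt 3 (i + k)) 1 (k + 3); first by apply: dv'.
    st (vt 2 (i + k)) 1 (k + 2); first by apply: dv'.
    st (vt 1 (i + k)) 1 (k + 1); first by apply: dv'.
    st (vt 0 (i + k)) 1 k; first by apply: dv'.
    apply: walkg => //; lia.
  + st (vt 3 (i + k)) 1 (k + 3); first by apply: dv'.
    st (vt 2 (i + k)) 1 (k + 2); first by apply: dv'.
    st (vt 1 (i + k)) 1 k; first by apply: dv'.
    apply: walkg' => //; lia.
- move=> x Hx; apply: (leq_trans _ low).
  have E : vt 4 (i + k) = vt 4 (ix (i + k)) by rewrite /vt ix_val.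
  rewrite E in Hx.
  have := nbr (i := ix (i + k)) (isT : 4 < 5) Hx; have := rel_lt (ix (i + k)) x.2;
    rewrite /adjR /step => Hr H.
  have : (val x.1 = 4 /\ rel (ix (i + k)) x.2 = 1) \/ (val x.1 = 4 /\ rel (ix (i + k)) x.2 = n - 1) \/
         (val x.1 = 3 /\ rel (ix (i + k)) x.2 = 0) by lia.
  case=> [[E1 E2]|[[E1 E2]|[E1 E2]]]; rewrite (vx_eq (ix (i + k)) x) E1 E2 /= vt_mod.
  + st (vt 1 i) 1 (k + 3); first by apply: dv.
    st (vt 1 (i + k + 1)) k 3; first by apply: walkg' => //; lia.
    st (vt 2 (i + k + 1)) 1 2; first by apply: dv.
    st (vt 3 (i + k + 1)) 1 1; first by apply: dv.
    by apply: dv.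
  + have -> : i + k + (n - 1) = (i + k - 1) + n by lia.
    rewrite vt_n.
    st (vt 1 i) 1 (k + 2); first by apply: dv.
    st (vt 1 (i + k - 1)) (k - 1) 3; first by apply: walkg => //; lia.
    st (vt 2 (i + k - 1)) 1 2; first by apply: dv.
    st (vt 3 (i + k - 1)) 1 1; first by apply: dv.
    by apply: dv.
  + rewrite addn0.
    st (vt 1 i) 1 (k + 2); first by apply: dv.
    st (vt 1 (i + k)) k 2; first by apply: walkg => //; lia.
    st (vt 2 (i + k)) 1 1; first by apply: dv.
    by apply: dv.
Qed.


Lemma pairC (i : 'I_n) w : strongly_resolves w (vt 2 i) (vt 3 (i + k)) ->
  w = vt 2 i \/ w = vt 3 (i + k).
Proof.
have low : k + 2 <= dist (vt 2 i) (vt 3 (i + k)).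
  have := lowF (h := hc) (sl := 2) i (vt 3 (i + k)) isT hc20 hc_lip hc_b.
  rewrite val_vt1 // /vt /= rel_ix modn_small; last lia.
  by rewrite /hc /mm'; lia.
apply: mmd; first by apply: vneq.
- move=> x Hx; rewrite [X in _ <= X]dist_sym; apply: (leq_trans _ low).
  have := nbr (isT : 2 < 5) Hx; have := rel_lt i x.2; rewrite /adjR /step => Hr H.
  have : (val x.1 = 1 /\ rel i x.2 = 0) \/ (val x.1 = 3 /\ rel i x.2 = 0) \/
         (val x.1 = 3 /\ rel i x.2 = n - 1) by lia.
  case=> [[E1 E2]|[[E1 E2]|[E1 E2]]]; rewrite (vx_eq i x) E1 E2.
  + rewrite addn0.
    st (vt 2 (i + k)) 1 (k + 1); first by apply: dv'.
    st (vt 1 (i + k)) 1 k; first by apply: dv'.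
    apply: walkg' => //; lia.
  + rewrite addn0.
    st (vt 4 (i + k)) 1 (k + 1); first by apply: dv.
    st (vt 4 i) k 1; first by apply: walkg' => //; lia.
    by apply: dv'.
  + st (vt 4 (i + k)) 1 (k + 1); first by apply: dv.
    st (vt 4 (i + (n - 1))) k 1; first by apply: walkg => //; lia.
    by apply: dv'.
- move=> x Hx; apply: (leq_trans _ low).
  have E : vt 3 (i + k) = vt 3 (ix (i + k)) by rewrite /vt ix_val.
  rewrite E in Hx.
  have := nbr (i := ix (i + k)) (isT : 3 < 5) Hx; have := rel_lt (ix (i + k)) x.2;
    rewrite /adjR /step => Hr H.
  have : (val x.1 = 2 /\ rel (ix (i + k)) x.2 = 0) \/ (val x.1 = 4 /\ rel (ix (i + k)) x.2 = 0) \/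
         (val x.1 = 2 /\ rel (ix (i + k)) x.2 = 1) by lia.
  case=> [[E1 E2]|[[E1 E2]|[E1 E2]]]; rewrite (vx_eq (ix (i + k)) x) E1 E2 /= vt_mod.
  + rewrite addn0.
    st (vt 1 i) 1 (k + 1); first by apply: dv'.
    st (vt 1 (i + k)) k 1; first by apply: walkg => //; lia.
    by apply: dv.
  + rewrite addn0.
    st (vt 3 i) 1 (k + 1); first by apply: dv.
    st (vt 4 i) 1 k; first by apply: dv.
    apply: walkg => //; lia.
  + st (vt 1 i) 1 (k + 1); first by apply: dv'.
    st (vt 1 (i + k + 1)) k 1; first by apply: walkg' => //; lia.
    by apply: dv.
Qed.

End Conc.

Lemma modinj n (i i' : 'I_n) s : (i + s) %% n = (i' + s) %% n -> i = i'.
Proof.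
move/eqP; rewrite eqn_modDr !modn_small // => /eqP H; exact: val_inj.
Qed.

Lemma vt_inj k (Hk : 0 < k) l l' j j' : l < 5 -> l' < 5 -> vt Hk l j = vt Hk l' j' ->
  l = l' /\ j %% (2 * k + 1) = j' %% (2 * k + 1).
Proof.
move=> H1 H2 [E1 E2]; split.
  by rewrite -(inordK H1) -(inordK H2) E1.
by [].
Qed.

Theorem lemma4p5 (k : nat) (S : {set V (2 * k + 1)}) :
  1 <= k -> strong_resolving_set S -> 2 * (2 * k + 1) <= #|S|.
Proof.
move=> Hk HS.
have hA : forall i : 'I_(2 * k + 1), vt Hk 0 i \in S \/ vt Hk 4 (i + k) \in S.
  move=> i; have [w Hw Hr] := HS (vt Hk 0 i) (vt Hk 4 (i + k)) (@vneq _ Hk 0 4 i (i + k) isT isT isT).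
  by case: (pairA Hr) => E; rewrite -E; [left|right].
have hC : forall i : 'I_(2 * k + 1), vt Hk 2 i \in S \/ vt Hk 3 (i + k) \in S.
  move=> i; have [w Hw Hr] := HS (vt Hk 2 i) (vt Hk 3 (i + k)) (@vneq _ Hk 2 3 i (i + k) isT isT isT).
  by case: (pairC Hr) => E; rewrite -E; [left|right].
pose F (bi : bool * 'I_(2 * k + 1)) : V (2 * k + 1) :=
  let: (b, i) := bi in
  if b then (if vt Hk 0 i \in S then vt Hk 0 i else vt Hk 4 (i + k))
  else (if vt Hk 2 i \in S then vt Hk 2 i else vt Hk 3 (i + k)).
have FS : forall bi, F bi \in S.
  case=> [[] i] /=.
    by case: ifP => // H; case: (hA i) => //; rewrite H.
  by case: ifP => // H; case: (hC i) => //; rewrite H.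
have Finj : injective F.
  case=> b i [b' i']; rewrite /F.
  case: b; case: b'; do 2 (case: ifP => _); move/vt_inj => /(_ isT isT) [E1 E2] //;
    first [ by congr pair; apply: (modinj (s := k))
          | by congr pair; apply: (modinj (s := 0)); rewrite !addn0 ].
have : #|F @: [set: bool * 'I_(2 * k + 1)]| <= #|S|.
  apply: subset_leq_card; apply/subsetP => x /imsetP [y _ ->]; exact: FS.
by rewrite card_imset // cardsT card_prod card_bool card_ord.
Qed.
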